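(* Let $T_R:\mathbb{Z}\to\mathbb{Z}$ be defined by $T_R(n)=3n/4$ if $n\equiv 0\pmod 4$, $T_R(n)=(n-2)/4$ if $n\equiv 2\pmod 4$, and $T_R(n)=(3n+1)/2$ if $n$ is odd. Define $T_R^*:\mathbb{Z}\to\mathbb{Z}$ by $T_R^*(n)=T_R(n)$ if $n\equiv 1\pmod 2$ or $n\equiv 0\pmod 4$; $T_R^*(n)=T_R^2(n)$ if $n\equiv 6\pmod 8$ or $n\equiv 2\pmod{16}$; and $T_R^*(n)=T_R^3(n)$ if $n\equiv 26\pmod{32}$, $n\equiv 10\pmod{64}$ or $n\equiv 42\pmod{64}$. Then for every integer $j$: (i) (class $0 \bmod 3$) $T_R^*(12j)=9j$, $T_R^*(48j+18)=9j+3$, $T_R^*(192j+138)=9j+6$, $T_R^*(192j+42)=3j$, $T_R^*(96j+90)=9j+8$, $T_R^*(24j+6)=9j+2$, $T_R^*(6j+3)=9j+5$; (ii) (class $1 \bmod 3$) $T_R^*(12j+4)=9j+3$, $T_R^*(48j+34)=9j+6$, $T_R^*(192j+10)=9j$, $T_R^*(192j+106)=3j+1$, $T_R^*(96j+58)=9j+5$, $T_R^*(24j+22)=9j+8$, $T_R^*(6j+1)=9j+2$; (iii) (class $2 \bmod 3$) $T_R^*(12j+8)=9j+6$, $T_R^*(48j+2)=9j$, $T_R^*(192j+74)=9j+3$, $T_R^*(192j+170)=3j+2$, $T_R^*(96j+26)=9j+2$, $T_R^*(24j+14)=9j+5$, $T_R^*(6j+5)=9j+8$. Here, for each $r\in\{0,1,2\}$,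 the seven residue classes listed in item (i), (ii), (iii) respectively partition the set of integers congruent to $r \pmod 3$. In particular $T_R^*$ maps the integers congruent to $0$ or $2 \pmod 3$ into the integers congruent to $0$ or $2\pmod 3$.
   Context: $T_R^k$ denotes the $k$-fold iterate of $T_R$. *)

(* Defs.v *)
From Stdlib Require Import ZArith List Bool.
Open Scope Z_scope.
Open Scope bool_scope.

(* T_R : Z -> Z.  In each case the division is exact, so Z.div is exact division. *)
Definition TR (n : Z) : Z :=
  if n mod 4 =? 0 then 3 * n / 4
  else if n mod 4 =? 2 then (n - 2) / 4
  else (3 * n + 1) / 2.

Definition TRiter (k : nat) (n : Z) : Z := Nat.iter k TR n.

(* T_R^* ; the case split below is exhaustive over Z (the final
   fallback branch is never reached). *)
Definition TRstar (n : Z) : Z :=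
  if (n mod 2 =? 1) || (n mod 4 =? 0) then TRiter 1 n
  else if (n mod 8 =? 6) || (n mod 16 =? 2) then TRiter 2 n
  else if (n mod 32 =? 26) || (n mod 64 =? 10) || (n mod 64 =? 42) then TRiter 3 n
  else n.

(* residue classes a (mod m), written as pairs (m, a) *)
Definition in_class (n : Z) (c : Z * Z) : bool := n mod (fst c) =? snd c.

Definition classes0 : list (Z * Z) :=
  (12,0) :: (48,18) :: (192,138) :: (192,42) :: (96,90) :: (24,6) :: (6,3) :: nil.
Definition classes1 : list (Z * Z) :=
  (12,4) :: (48,34) :: (192,10) :: (192,106) :: (96,58) :: (24,22) :: (6,1) :: nil.
Definition classes2 : list (Z * Z) :=
  (12,8) :: (48,2) :: (192,74) :: (192,170) :: (96,26) :: (24,14) :: (6,5) :: nil.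

Definition partitions_mod3 (cls : list (Z * Z)) (r : Z) : Prop :=
  forall n : Z,
    length (filter (in_class n) cls) = (if n mod 3 =? r then 1%nat else 0%nat).

(* Main.v *)
Require Import Defs.
From Stdlib Require Import ZArith List Lia Bool.
Open Scope Z_scope.

Ltac L := Z.div_mod_to_equations; lia.

Lemma TR_0 n : n mod 4 = 0 -> TR n = 3*n/4.
Proof. intro H. unfold TR. rewrite H. reflexivity. Qed.
Lemma TR_2 n : n mod 4 = 2 -> TR n = (n-2)/4.
Proof. intro H. unfold TR. rewrite H. reflexivity. Qed.
Lemma TR_1 n : n mod 2 = 1 -> TR n = (3*n+1)/2.
Proof. intro H. unfold TR.
  destruct (Z.eqb_spec (n mod 4) 0); [L|].
  destruct (Z.eqb_spec (n mod 4) 2); [L|]. reflexivity. Qed.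

Ltac dsp := repeat match goal with |- context[?a =? ?b] => destruct (Z.eqb_spec a b) end; simpl; try L.

Lemma TS1 n : n mod 2 = 1 \/ n mod 4 = 0 -> TRstar n = TR n.
Proof. intro H. unfold TRstar. dsp; reflexivity. Qed.
Lemma TS2 n : ~(n mod 2 = 1 \/ n mod 4 = 0) -> n mod 8 = 6 \/ n mod 16 = 2 -> TRstar n = TR (TR n).
Proof. intros H H'. unfold TRstar. dsp; reflexivity. Qed.
Lemma TS3 n : ~(n mod 2 = 1 \/ n mod 4 = 0) -> ~(n mod 8 = 6 \/ n mod 16 = 2) ->
  n mod 32 = 26 \/ n mod 64 = 10 \/ n mod 64 = 42 -> TRstar n = TR (TR (TR n)).
Proof. intros H H' H''. unfold TRstar. dsp; reflexivity. Qed.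

Ltac trstep := match goal with |- context [TR ?x] =>
  first [rewrite (TR_0 x) by L | rewrite (TR_2 x) by L | rewrite (TR_1 x) by L] end.
Ltac ident := first [rewrite TS1 by L | rewrite TS2 by L | rewrite TS3 by L];
  repeat trstep; Z.div_mod_to_equations; lia.

Lemma idents : forall j : Z,
     TRstar (12*j) = 9*j /\ TRstar (48*j+18) = 9*j+3 /\
     TRstar (192*j+138) = 9*j+6 /\ TRstar (192*j+42) = 3*j /\
     TRstar (96*j+90) = 9*j+8 /\ TRstar (24*j+6) = 9*j+2 /\
     TRstar (6*j+3) = 9*j+5 /\
     TRstar (12*j+4) = 9*j+3 /\ TRstar (48*j+34) = 9*j+6 /\
     TRstar (192*j+10) = 9*j /\ TRstar (192*j+106) = 3*j+1 /\
     TRstar (96*j+58) = 9*j+5 /\ TRstar (24*j+22) = 9*j+8 /\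
     TRstar (6*j+1) = 9*j+2 /\
     TRstar (12*j+8) = 9*j+6 /\ TRstar (48*j+2) = 9*j /\
     TRstar (192*j+74) = 9*j+3 /\ TRstar (192*j+170) = 3*j+2 /\
     TRstar (96*j+26) = 9*j+2 /\ TRstar (24*j+14) = 9*j+5 /\
     TRstar (6*j+5) = 9*j+8.
Proof. intro j. repeat split; ident. Qed.

Lemma filt_red n cls : (forall c, In c cls -> (fst c | 192)) ->
  filter (in_class n) cls = filter (in_class (n mod 192)) cls.
Proof.
  induction cls as [|c cls IH]; intro H; simpl; auto.
  assert (E: in_class (n mod 192) c = in_class n c).
  { unfold in_class. rewrite Z.mod_mod_divide by (apply H; simpl; auto). reflexivity. }
  rewrite E, IH by (intros; apply H; simpl; auto). reflexivity.
Qed.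

Lemma range_all (P : Z -> bool) : forallb P (map Z.of_nat (seq 0 192)) = true ->
  forall r, 0 <= r < 192 -> P r = true.
Proof.
  intros H r Hr. rewrite forallb_forall in H. apply H.
  replace r with (Z.of_nat (Z.to_nat r)) by lia. apply in_map. apply in_seq. lia.
Qed.

Lemma div192 (cls : list (Z*Z)) : forallb (fun c : Z*Z => (192 mod fst c =? 0) && (0 <? fst c)) cls = true ->
  forall c, In c cls -> (fst c | 192).
Proof.
  intros H c Hc. rewrite forallb_forall in H. specialize (H c Hc).
  apply andb_true_iff in H as [H1 H2]. apply Z.eqb_eq in H1. apply Z.ltb_lt in H2.
  apply Z.mod_divide; lia.
Qed.

Lemma part (cls : list (Z*Z)) k : forallb (fun c : Z*Z => (192 mod fst c =? 0) && (0 <? fst c)) cls = true ->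
  forallb (fun r => Nat.eqb (length (filter (in_class r) cls)) (if r mod 3 =? k then 1%nat else 0%nat))
     (map Z.of_nat (seq 0 192)) = true ->
  partitions_mod3 cls k.
Proof.
  intros H1 H2 n. rewrite filt_red by (apply div192; auto).
  rewrite <- (Z.mod_mod_divide n 192 3) by (exists 64; reflexivity).
  apply Nat.eqb_eq. apply (range_all _ H2). apply Z.mod_pos_bound. lia.
Qed.

Lemma part5 n : n mod 3 <> 1 -> existsb (in_class n) (classes0 ++ classes2) = true.
Proof.
  intro H.
  assert (E: forall r, 0 <= r < 192 -> ((r mod 3 =? 1) || existsb (in_class r) (classes0 ++ classes2)) = true)
    by (apply range_all; vm_compute; reflexivity).
  specialize (E (n mod 192) ltac:(apply Z.mod_pos_bound; lia)).
  rewrite (Z.mod_mod_divide n 192 3) in E by (exists 64; reflexivity).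
  destruct (Z.eqb_spec (n mod 3) 1); [lia|]. simpl in E.
  rewrite <- !existsb_filter_aux in E || idtac.
  revert E. unfold in_class; simpl. rewrite !(Z.mod_mod_divide n 192) by (apply Z.mod_divide; [lia|reflexivity]).
  auto.
Qed.

Theorem theorem2 :
  (forall j : Z,
     (* (i) class 0 mod 3 *)
     TRstar (12*j) = 9*j /\ TRstar (48*j+18) = 9*j+3 /\
     TRstar (192*j+138) = 9*j+6 /\ TRstar (192*j+42) = 3*j /\
     TRstar (96*j+90) = 9*j+8 /\ TRstar (24*j+6) = 9*j+2 /\
     TRstar (6*j+3) = 9*j+5 /\
     (* (ii) class 1 mod 3 *)
     TRstar (12*j+4) = 9*j+3 /\ TRstar (48*j+34) = 9*j+6 /\
     TRstar (192*j+10) = 9*j /\ TRstar (192*j+106) = 3*j+1 /\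
     TRstar (96*j+58) = 9*j+5 /\ TRstar (24*j+22) = 9*j+8 /\
     TRstar (6*j+1) = 9*j+2 /\
     (* (iii) class 2 mod 3 *)
     TRstar (12*j+8) = 9*j+6 /\ TRstar (48*j+2) = 9*j /\
     TRstar (192*j+74) = 9*j+3 /\ TRstar (192*j+170) = 3*j+2 /\
     TRstar (96*j+26) = 9*j+2 /\ TRstar (24*j+14) = 9*j+5 /\
     TRstar (6*j+5) = 9*j+8) /\
  partitions_mod3 classes0 0 /\
  partitions_mod3 classes1 1 /\
  partitions_mod3 classes2 2 /\
  (forall n : Z, n mod 3 <> 1 -> TRstar n mod 3 <> 1).
Proof.
  split; [exact idents|].
  split; [apply part; vm_compute; reflexivity|].
  split; [apply part; vm_compute; reflexivity|].
  split; [apply part; vm_compute; reflexivity|].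
  intros n Hn. apply part5 in Hn. apply existsb_exists in Hn as [[m a] [Hin Hc]].
  unfold in_class in Hc; simpl in Hc. apply Z.eqb_eq in Hc.
  assert (Hd: n = m * (n / m) + a) by (rewrite <- Hc; apply Z.div_mod; simpl in Hin; intuition congruence).
  set (j := n / m) in Hd. clearbody j. subst n. clear Hc.
  destruct (idents j) as (H1&H2&H3&H4&H5&H6&H7&_&_&_&_&_&_&_&H8&H9&H10&H11&H12&H13&H14).
  simpl in Hin; intuition (try congruence);
  match goal with E : (_, _) = (_, _) |- _ => injection E as <- <- end;
  first [rewrite H1 in H | rewrite H2 in H | rewrite H3 in H | rewrite H4 in H | rewrite H5 in H
        | rewrite H6 in H | rewrite H7 in H
        | rewrite H8 in H | rewrite H9 in H | rewrite H10 in H | rewrite H11 in H | rewrite H12 in H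
        | rewrite H13 in H | rewrite H14 in H
        | replace (12*j+0) with (12*j) in H by ring; rewrite H1 in H];
  L.
Qed.
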